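(* Let $\zeta_5$ be a primitive $5$-th root of unity. (1) $\left\{\mathcal{S}_{\frac{r}{s}}(\zeta_5) : \tfrac{r}{s}>0\right\}=\{0,\ c,\ (1+\zeta_5)c,\ (1-\zeta_5^2)c : c=\pm\zeta_5^j,\ j=0,1,\dots,4\}$. (2) For coprime positive integers $r,s$, $\mathcal{S}_{\frac{r}{s}}(\zeta_5)=0$ if and only if $s\in 5\mathbb{Z}$ and $r\equiv 1$ or $4 \pmod 5$.
   Context: Let $q$ be a formal parameter, $R_q=\begin{pmatrix} q & 1\\ 0 & 1\end{pmatrix}$, $S_q=\begin{pmatrix} 0 & -q^{-1}\\ 1 & 0\end{pmatrix}$, and for integers $c_1,\dots,c_k$ put $M_q(c_1,\dots,c_k)=R_q^{c_1}S_qR_q^{c_2}S_q\cdots R_q^{c_k}S_q$. Every irreducible fraction $\frac{r}{s}>1$ ($r,s$ positive coprime integers) has a unique negative (Hirzebruch–Jung) continued fraction expansion $\frac{r}{s}=c_1-\cfrac{1}{c_2-\cfrac{1}{\ddots-\cfrac{1}{c_k}}}$ with all $c_i\ge 2$; for such $\frac rs$ define polynomials $\mathcal{R}_{\frac rs}(q),\mathcal{S}_{\frac rs}(q)$ as the first column of $M_q(c_1,\dots,c_k)$, i.e. $M_q(c_1,\dots,c_k)=\begin{pmatrix}\mathcal{R}_{\frac rs}(q) & *\\ \mathcal{S}_{\frac rs}(q) & *\end{pmatrix}$. For an arbitrary rational number $x=\frac rs$ (in lowest terms, $s>0$), define $\mathcal{S}_x(q):=\mathcal{S}_{x+m}(q)$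 for any integer $m$ with $x+m>1$ (this is independent of $m$); equivalently $\mathcal{S}_x$ is the denominator, normalized to lie in $\mathbb{Z}[q]$ with constant term $1$, of the $q$-deformed rational $[x]_q$ defined by $[x]_q=\mathcal{R}_x/\mathcal{S}_x$ for $x>1$ and $[x+1]_q=q[x]_q+1$. *)

(* Defs.v *)
From HB Require Import structures.
From mathcomp Require Import all_boot all_order all_algebra all_field.
Set Implicit Arguments. Unset Strict Implicit. Unset Printing Implicit Defensive.
Import Order.TTheory GRing.Theory Num.Theory.
Local Open Scope ring_scope.

(* Negative (Hirzebruch-Jung) continued fraction of r/s (r > s >= 1 coprime):
   r/s = c1 - 1/(c2 - ... - 1/ck), all ci >= 2.
   c1 = ceil(r/s); if c1*s = r we stop, otherwise continue with s/(c1*s - r).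
   The fuel argument (taken to be s.+1) bounds the number of steps, since the
   denominator strictly decreases. *)
Fixpoint hj_aux (fuel r s : nat) : seq nat :=
  match fuel with
  | 0 => [::]
  | fuel'.+1 =>
      let c := ((r + s).-1 %/ s)%N in
      if (c * s == r)%N then [:: c] else c :: hj_aux fuel' s (c * s - r)
  end.

Definition hj (r s : nat) : seq nat := hj_aux s.+1 r s.

Section Mats.
Variable F : fieldType.
Variable q : F.

Definition Rq : 'M[F]_2 :=
  \matrix_(i < 2, j < 2)
    (if (i == 0 :> nat)%N then (if (j == 0 :> nat)%N then q else 1) else
       (if (j == 0 :> nat)%N then 0 else 1)).

Definition Sq : 'M[F]_2 :=
  \matrix_(i < 2, j < 2)
    (if (i == 0 :> nat)%N then (if (j == 0 :> nat)%N then 0 else - q^-1) else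
       (if (j == 0 :> nat)%N then 1 else 0)).

Definition Mq (cs : seq nat) : 'M[F]_2 :=
  foldr (fun c M => Rq ^+ c * Sq * M) 1 cs.

(* Value at q of the polynomial S_{r/s} for r/s > 1 (r,s coprime): the (2,1)
   entry of M_q(c1,...,ck).  Evaluating the matrix product at a nonzero q is
   the same as evaluating the polynomial S_{r/s} at q. *)
Definition Sfrac (r s : nat) : F := Mq (hj r s) (inord 1) (inord 0).

(* S_x(q) for an arbitrary rational x = numq x / denq x:
   S_x := S_{x+m} with m = |numq x| + 2, so that x + m > 1. *)
Definition Sval (x : rat) : F :=
  let m : int := Posz (absz (numq x) + 2)%N in
  Sfrac (absz (numq x + m * denq x)) (absz (denq x)).
End Mats.

(* Main.v *)
Require Import Defs.
From HB Require Import structures.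
From mathcomp Require Import all_boot all_order all_algebra all_field.
From mathcomp Require Import ring zify.
Import Order.TTheory GRing.Theory Num.Theory.
Local Open Scope ring_scope.

Definition K := (int * int * int * int * int)%type.
Definition V := (K * K)%type.
Definition st := (V * (nat * nat))%type.

Definition krot (a : K) : K := let: (a0, a1, a2, a3, a4) := a in (a4, a0, a1, a2, a3).
Definition kadd (a b : K) : K :=
  let: (a0, a1, a2, a3, a4) := a in let: (b0, b1, b2, b3, b4) := b in
  (a0 + b0, a1 + b1, a2 + b2, a3 + b3, a4 + b4).
Definition kneg (a : K) : K := let: (a0, a1, a2, a3, a4) := a in (- a0, - a1, - a2, - a3, - a4).
Definition knorm (a : K) : K := let: (a0, a1, a2, a3, a4) := a in (a0 - a4, a1 - a4, a2 - a4, a3 - a4, 0).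
Definition k0 : K := (0, 0, 0, 0, 0)%Z.
Definition k1 : K := (1, 0, 0, 0, 0)%Z.

Definition kR (v : V) : V := (knorm (kadd (krot v.1) v.2), v.2).
Definition kS (v : V) : V := (knorm (kneg (krot (krot (krot (krot v.2))))), v.1).
Definition rT (p : nat * nat) : nat * nat := ((p.1 + p.2) %% 5, p.2)%N.
Definition rS (p : nat * nat) : nat * nat := ((4 * p.2) %% 5, p.1)%N.
Definition stR (w : st) : st := (kR w.1, rT w.2).
Definition stS (w : st) : st := (kS w.1, rS w.2).

Fixpoint stcol (cs : seq nat) : st :=
  match cs with
  | [::] => ((k1, k0), (1, 0)%N)
  | c :: l => iter c stR (stS (stcol l))
  end.

Definition kbase (k : nat) : K :=
  if k == 0%N then k1 else if k == 1%N then (1, 1, 0, 0, 0)%Z else (1, 0, -1, 0, 0)%Z.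
Definition ktarget (t : bool * nat * nat) : K :=
  let: (b, j, k) := t in knorm ((if b then kneg else id) (iter j krot (kbase k))).
Definition trip : seq (bool * nat * nat) :=
  [seq (bj, k) | bj <- [seq (b, j) | b <- [:: false; true], j <- iota 0 5], k <- iota 0 3].
Definition cond (p : nat * nat) : bool := (p.2 == 0%N) && ((p.1 == 1%N) || (p.1 == 4%N)).
Definition wit (t : bool * nat * nat) : nat * nat :=
  match t with
  | (false, 0, 0) => (1, 1) | (false, 0, 1) => (1, 2) | (false, 0, _) => (7, 25)
  | (false, 1, 0) => (6, 11) | (false, 1, 1) => (4, 7) | (false, 1, _) => (12, 55)
  | (false, 2, 0) => (4, 11) | (false, 2, 1) => (2, 7) | (false, 2, _) => (2, 5)
  | (false, 3, 0) => (3, 11) | (false, 3, 1) => (5, 17) | (false, 3, _) => (22, 35)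
  | (false, _, 0) => (21, 26) | (false, _, 1) => (4, 17) | (false, _, _) => (27, 70)
  | (true, 0, 0) => (11, 19) | (true, 0, 1) => (5, 13) | (true, 0, _) => (18, 25)
  | (true, 1, 0) => (2, 9) | (true, 1, 1) => (3, 13) | (true, 1, _) => (3, 10)
  | (true, 2, 0) => (3, 14) | (true, 2, 1) => (5, 23) | (true, 2, _) => (53, 90)
  | (true, 3, 0) => (4, 19) | (true, 3, 1) => (1, 3) | (true, 3, _) => (8, 35)
  | (true, _, 0) => (1, 4) | (true, _, 1) => (3, 8) | (true, _, _) => (3, 5)
  end%N.
Definition Rp (p : nat * nat) : nat := (p.1 + (p.1 + 2) * p.2)%N.
Definition Wl : seq st := [::
  (((-1, -2, -1, -1, 0), (-1, -1, 0, 0, 0)), (0, 3)%N);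
  (((-1, -1, -2, -1, 0), (-1, -1, -1, 0, 0)), (0, 2)%N);
  (((-1, -1, -1, -1, 0), (-1, -1, -1, -1, 0)), (1, 1)%N);
  (((-1, -1, -1, -1, 0), (-1, -1, -1, 0, 0)), (1, 2)%N);
  (((-1, -1, -1, -1, 0), (-1, -1, 0, 0, 0)), (1, 3)%N);
  (((-1, -1, -1, -1, 0), (-1, 0, 0, 0, 0)), (1, 4)%N);
  (((-1, -1, -1, -1, 0), (0, 0, 0, 0, 0)), (1, 0)%N);
  (((-1, -1, -1, 0, 0), (-1, -1, 0, 0, 0)), (2, 3)%N);
  (((-1, -1, -1, 0, 0), (-1, 0, 0, 0, 0)), (2, 4)%N);
  (((-1, -1, -1, 0, 0), (-1, 0, 0, 1, 0)), (2, 0)%N);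
  (((-1, -1, -1, 0, 0), (0, 0, 0, 1, 0)), (2, 1)%N);
  (((-1, -1, -1, 0, 0), (0, 0, 1, 1, 0)), (2, 2)%N);
  (((-1, -1, 0, 0, 0), (-1, 0, 0, 0, 0)), (3, 4)%N);
  (((-1, -1, 0, 0, 0), (-1, 0, 1, 0, 0)), (3, 0)%N);
  (((-1, -1, 0, 0, 0), (0, 0, 1, 0, 0)), (3, 1)%N);
  (((-1, -1, 0, 0, 0), (0, 0, 1, 1, 0)), (3, 2)%N);
  (((-1, -1, 0, 0, 0), (0, 1, 1, 1, 0)), (3, 3)%N);
  (((-1, 0, 0, 0, 0), (-1, 0, 0, 0, 0)), (4, 4)%N);
  (((-1, 0, 0, 0, 0), (0, 0, 0, 0, 0)), (4, 0)%N);
  (((-1, 0, 0, 0, 0), (0, 1, 0, 0, 0)), (4, 1)%N);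
  (((-1, 0, 0, 0, 0), (0, 1, 1, 0, 0)), (4, 2)%N);
  (((-1, 0, 0, 0, 0), (0, 1, 1, 1, 0)), (4, 3)%N);
  (((-1, 0, 0, 1, 0), (0, 1, 1, 1, 0)), (0, 3)%N);
  (((-1, 0, 1, 0, 0), (0, 1, 1, 0, 0)), (0, 2)%N);
  (((0, -1, -1, -1, 0), (-1, -2, -1, -1, 0)), (2, 0)%N);
  (((0, -1, -1, -1, 0), (-1, -1, -1, -1, 0)), (2, 1)%N);
  (((0, -1, -1, -1, 0), (-1, -1, -1, 0, 0)), (2, 2)%N);
  (((0, -1, -1, -1, 0), (0, -1, -1, 0, 0)), (2, 3)%N);
  (((0, -1, -1, -1, 0), (0, -1, 0, 0, 0)), (2, 4)%N);
  (((0, -1, -1, 0, 0), (-1, -1, -1, 0, 0)), (3, 2)%N);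
  (((0, -1, -1, 0, 0), (-1, -1, 0, 0, 0)), (3, 3)%N);
  (((0, -1, -1, 0, 0), (0, -1, 0, 0, 0)), (3, 4)%N);
  (((0, -1, -1, 0, 0), (0, -1, 0, 1, 0)), (3, 0)%N);
  (((0, -1, -1, 0, 0), (0, 0, 0, 1, 0)), (3, 1)%N);
  (((0, -1, 0, 0, 0), (-1, -1, 0, 0, 0)), (4, 3)%N);
  (((0, -1, 0, 0, 0), (0, -1, 0, 0, 0)), (4, 4)%N);
  (((0, -1, 0, 0, 0), (0, 0, 0, 0, 0)), (4, 0)%N);
  (((0, -1, 0, 0, 0), (0, 0, 1, 0, 0)), (4, 1)%N);
  (((0, -1, 0, 0, 0), (0, 0, 1, 1, 0)), (4, 2)%N);
  (((0, -1, 0, 1, 0), (0, 0, 1, 1, 0)), (0, 2)%N);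
  (((0, 0, -1, -1, 0), (-1, -1, -2, -1, 0)), (3, 0)%N);
  (((0, 0, -1, -1, 0), (-1, -1, -1, -1, 0)), (3, 1)%N);
  (((0, 0, -1, -1, 0), (0, -1, -1, -1, 0)), (3, 2)%N);
  (((0, 0, -1, -1, 0), (0, -1, -1, 0, 0)), (3, 3)%N);
  (((0, 0, -1, -1, 0), (0, 0, -1, 0, 0)), (3, 4)%N);
  (((0, 0, -1, 0, 0), (-1, -1, -1, 0, 0)), (4, 2)%N);
  (((0, 0, -1, 0, 0), (0, -1, -1, 0, 0)), (4, 3)%N);
  (((0, 0, -1, 0, 0), (0, 0, -1, 0, 0)), (4, 4)%N);
  (((0, 0, -1, 0, 0), (0, 0, 0, 0, 0)), (4, 0)%N);
  (((0, 0, -1, 0, 0), (0, 0, 0, 1, 0)), (4, 1)%N);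
  (((0, 0, 0, -1, 0), (-1, -1, -1, -1, 0)), (4, 1)%N);
  (((0, 0, 0, -1, 0), (0, -1, -1, -1, 0)), (4, 2)%N);
  (((0, 0, 0, -1, 0), (0, 0, -1, -1, 0)), (4, 3)%N);
  (((0, 0, 0, -1, 0), (0, 0, 0, -1, 0)), (4, 4)%N);
  (((0, 0, 0, -1, 0), (0, 0, 0, 0, 0)), (4, 0)%N);
  (((0, 0, 0, 0, 0), (-1, -1, -1, -1, 0)), (0, 1)%N);
  (((0, 0, 0, 0, 0), (-1, 0, 0, 0, 0)), (0, 4)%N);
  (((0, 0, 0, 0, 0), (0, -1, 0, 0, 0)), (0, 4)%N);
  (((0, 0, 0, 0, 0), (0, 0, -1, 0, 0)), (0, 4)%N);
  (((0, 0, 0, 0, 0), (0, 0, 0, -1, 0)), (0, 4)%N);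
  (((0, 0, 0, 0, 0), (0, 0, 0, 1, 0)), (0, 1)%N);
  (((0, 0, 0, 0, 0), (0, 0, 1, 0, 0)), (0, 1)%N);
  (((0, 0, 0, 0, 0), (0, 1, 0, 0, 0)), (0, 1)%N);
  (((0, 0, 0, 0, 0), (1, 0, 0, 0, 0)), (0, 1)%N);
  (((0, 0, 0, 0, 0), (1, 1, 1, 1, 0)), (0, 4)%N);
  (((0, 0, 0, 1, 0), (0, 0, 0, 0, 0)), (1, 0)%N);
  (((0, 0, 0, 1, 0), (0, 0, 0, 1, 0)), (1, 1)%N);
  (((0, 0, 0, 1, 0), (0, 0, 1, 1, 0)), (1, 2)%N);
  (((0, 0, 0, 1, 0), (0, 1, 1, 1, 0)), (1, 3)%N);
  (((0, 0, 0, 1, 0), (1, 1, 1, 1, 0)), (1, 4)%N);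
  (((0, 0, 1, 0, 0), (0, 0, 0, -1, 0)), (1, 4)%N);
  (((0, 0, 1, 0, 0), (0, 0, 0, 0, 0)), (1, 0)%N);
  (((0, 0, 1, 0, 0), (0, 0, 1, 0, 0)), (1, 1)%N);
  (((0, 0, 1, 0, 0), (0, 1, 1, 0, 0)), (1, 2)%N);
  (((0, 0, 1, 0, 0), (1, 1, 1, 0, 0)), (1, 3)%N);
  (((0, 0, 1, 1, 0), (0, 0, 1, 0, 0)), (2, 1)%N);
  (((0, 0, 1, 1, 0), (0, 1, 1, 0, 0)), (2, 2)%N);
  (((0, 0, 1, 1, 0), (0, 1, 1, 1, 0)), (2, 3)%N);
  (((0, 0, 1, 1, 0), (1, 1, 1, 1, 0)), (2, 4)%N);
  (((0, 0, 1, 1, 0), (1, 1, 2, 1, 0)), (2, 0)%N);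
  (((0, 1, 0, -1, 0), (0, 0, -1, -1, 0)), (0, 3)%N);
  (((0, 1, 0, 0, 0), (0, 0, -1, -1, 0)), (1, 3)%N);
  (((0, 1, 0, 0, 0), (0, 0, -1, 0, 0)), (1, 4)%N);
  (((0, 1, 0, 0, 0), (0, 0, 0, 0, 0)), (1, 0)%N);
  (((0, 1, 0, 0, 0), (0, 1, 0, 0, 0)), (1, 1)%N);
  (((0, 1, 0, 0, 0), (1, 1, 0, 0, 0)), (1, 2)%N);
  (((0, 1, 1, 0, 0), (0, 0, 0, -1, 0)), (2, 4)%N);
  (((0, 1, 1, 0, 0), (0, 1, 0, -1, 0)), (2, 0)%N);
  (((0, 1, 1, 0, 0), (0, 1, 0, 0, 0)), (2, 1)%N);
  (((0, 1, 1, 0, 0), (1, 1, 0, 0, 0)), (2, 2)%N);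
  (((0, 1, 1, 0, 0), (1, 1, 1, 0, 0)), (2, 3)%N);
  (((0, 1, 1, 1, 0), (0, 1, 0, 0, 0)), (3, 1)%N);
  (((0, 1, 1, 1, 0), (0, 1, 1, 0, 0)), (3, 2)%N);
  (((0, 1, 1, 1, 0), (1, 1, 1, 0, 0)), (3, 3)%N);
  (((0, 1, 1, 1, 0), (1, 1, 1, 1, 0)), (3, 4)%N);
  (((0, 1, 1, 1, 0), (1, 2, 1, 1, 0)), (3, 0)%N);
  (((1, 0, -1, 0, 0), (0, -1, -1, 0, 0)), (0, 3)%N);
  (((1, 0, 0, -1, 0), (0, -1, -1, -1, 0)), (0, 2)%N);
  (((1, 0, 0, 0, 0), (0, -1, -1, -1, 0)), (1, 2)%N);
  (((1, 0, 0, 0, 0), (0, -1, -1, 0, 0)), (1, 3)%N);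
  (((1, 0, 0, 0, 0), (0, -1, 0, 0, 0)), (1, 4)%N);
  (((1, 0, 0, 0, 0), (0, 0, 0, 0, 0)), (1, 0)%N);
  (((1, 0, 0, 0, 0), (1, 0, 0, 0, 0)), (1, 1)%N);
  (((1, 1, 0, 0, 0), (0, -1, -1, -1, 0)), (2, 2)%N);
  (((1, 1, 0, 0, 0), (0, 0, -1, -1, 0)), (2, 3)%N);
  (((1, 1, 0, 0, 0), (0, 0, -1, 0, 0)), (2, 4)%N);
  (((1, 1, 0, 0, 0), (1, 0, -1, 0, 0)), (2, 0)%N);
  (((1, 1, 0, 0, 0), (1, 0, 0, 0, 0)), (2, 1)%N);
  (((1, 1, 1, 0, 0), (0, 0, -1, -1, 0)), (3, 3)%N);
  (((1, 1, 1, 0, 0), (0, 0, 0, -1, 0)), (3, 4)%N);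
  (((1, 1, 1, 0, 0), (1, 0, 0, -1, 0)), (3, 0)%N);
  (((1, 1, 1, 0, 0), (1, 0, 0, 0, 0)), (3, 1)%N);
  (((1, 1, 1, 0, 0), (1, 1, 0, 0, 0)), (3, 2)%N);
  (((1, 1, 1, 1, 0), (0, 0, 0, 0, 0)), (4, 0)%N);
  (((1, 1, 1, 1, 0), (1, 0, 0, 0, 0)), (4, 1)%N);
  (((1, 1, 1, 1, 0), (1, 1, 0, 0, 0)), (4, 2)%N);
  (((1, 1, 1, 1, 0), (1, 1, 1, 0, 0)), (4, 3)%N);
  (((1, 1, 1, 1, 0), (1, 1, 1, 1, 0)), (4, 4)%N);
  (((1, 1, 2, 1, 0), (1, 1, 1, 0, 0)), (0, 3)%N);
  (((1, 2, 1, 1, 0), (1, 1, 0, 0, 0)), (0, 2)%N)]%Z.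
Lemma W_closed : all (fun w => (stR w \in Wl) && (stS w \in Wl)) Wl.
Proof. by vm_compute. Qed.
Lemma W_start : ((k1, k0), (1, 0)%N) \in Wl.
Proof. by vm_compute. Qed.
Lemma W_check : all (fun w => (cond w.2 ==> (w.1.2 == k0)) &&
   (~~ cond w.2 ==> has (fun t => ktarget t == w.1.2) trip)) Wl.
Proof. by vm_compute. Qed.
Lemma wit_check : all (fun t => let p := wit t in
   [&& coprime p.1 p.2, (0 < p.1)%N, (0 < p.2)%N &
    (stcol (hj (Rp p) p.2)).1.2 == ktarget t]) trip.
Proof. by vm_compute. Qed.
Lemma zero_check : (stcol (hj (Rp (1,5)%N) 5)).1.2 == k0.
Proof. by vm_compute. Qed.

Section Ev.
Variable z : algC.
Hypothesis hz5 : z ^+ 5 = 1.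
Hypothesis hz1 : z != 1.

Definition evK (a : K) : algC :=
  let: (a0, a1, a2, a3, a4) := a in
  a0%:~R + a1%:~R * z + a2%:~R * z ^+ 2 + a3%:~R * z ^+ 3 + a4%:~R * z ^+ 4.

Lemma zsum : 1 + z + z ^+ 2 + z ^+ 3 + z ^+ 4 = 0.
Proof.
have : (z - 1) * (1 + z + z ^+ 2 + z ^+ 3 + z ^+ 4) = 0.
  have -> : (z - 1) * (1 + z + z ^+ 2 + z ^+ 3 + z ^+ 4) = z ^+ 5 - 1 by ring.
  by rewrite hz5 subrr.
by move/eqP; rewrite mulf_eq0 subr_eq0 (negbTE hz1) => /eqP.
Qed.

Lemma evK_rot a : evK (krot a) = z * evK a.
Proof.
case: a => [[[[a0 a1] a2] a3] a4] /=.
apply/eqP; rewrite -subr_eq0; apply/eqP.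
have -> : a4%:~R + a0%:~R * z + a1%:~R * z ^+ 2 + a2%:~R * z ^+ 3 + a3%:~R * z ^+ 4 -
  z * (a0%:~R + a1%:~R * z + a2%:~R * z ^+ 2 + a3%:~R * z ^+ 3 + a4%:~R * z ^+ 4)
  = a4%:~R * (1 - z ^+ 5) :> algC by ring.
by rewrite hz5 subrr mulr0.
Qed.

Lemma evK_add a b : evK (kadd a b) = evK a + evK b.
Proof.
case: a => [[[[a0 a1] a2] a3] a4]; case: b => [[[[b0 b1] b2] b3] b4] /=.
rewrite !rmorphD /=; ring.
Qed.

Lemma evK_neg a : evK (kneg a) = - evK a.
Proof.
case: a => [[[[a0 a1] a2] a3] a4] /=.
rewrite !rmorphN /=; ring.
Qed.

Lemma evK_norm a : evK (knorm a) = evK a.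
Proof.
case: a => [[[[a0 a1] a2] a3] a4] /=.
apply/eqP; rewrite -subr_eq0; apply/eqP.
rewrite !rmorphB /=.
have -> : a0%:~R - a4%:~R + (a1%:~R - a4%:~R) * z + (a2%:~R - a4%:~R) * z ^+ 2 +
   (a3%:~R - a4%:~R) * z ^+ 3 + (0:int)%:~R * z ^+ 4 -
   (a0%:~R + a1%:~R * z + a2%:~R * z ^+ 2 + a3%:~R * z ^+ 3 + a4%:~R * z ^+ 4)
  = - a4%:~R * (1 + z + z ^+ 2 + z ^+ 3 + z ^+ 4) :> algC by rewrite mulr0z; ring.
by rewrite zsum mulr0.
Qed.

Lemma evK0 : evK k0 = 0.
Proof. by rewrite /= !mulr0z !mul0r !addr0. Qed.
Lemma evK1 : evK k1 = 1.
Proof. by rewrite /= !mulr0z !mul0r !addr0. Qed.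

End Ev.

Section Mat.
Variable z : algC.
Hypothesis hz5 : z ^+ 5 = 1.
Hypothesis hz1 : z != 1.

Lemma zinv : z^-1 = z ^+ 4.
Proof.
have h : z * z ^+ 4 = 1 by rewrite -exprS hz5.
by rewrite -[z^-1]mulr1 -h mulrA mulVf ?mul1r //; apply/eqP => z0; move: h; rewrite z0 mul0r => /eqP; rewrite eq_sym oner_eq0.
Qed.

Lemma mul2E (A B : 'M[algC]_2) i j : (A * B) i j = A i 0 * B 0 j + A i 1 * B 1 j.
Proof.
rewrite -mulmxE !mxE big_ord_recl big_ord1.
have -> : lift ord0 ord0 = 1 :> 'I_2 by apply/val_inj.
have -> : ord0 = 0 :> 'I_2 by apply/val_inj.
by [].
Qed.

Lemma Rq_mul (M : 'M[algC]_2) :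
  (Rq z * M) 0 0 = z * M 0 0 + M 1 0 /\ (Rq z * M) 1 0 = M 1 0.
Proof. by rewrite !mul2E !mxE /= !mul1r !mul0r ?add0r ?addr0. Qed.

Lemma Sq_mul (M : 'M[algC]_2) :
  (Sq z * M) 0 0 = - z^-1 * M 1 0 /\ (Sq z * M) 1 0 = M 0 0.
Proof. by rewrite !mul2E !mxE /= !mul1r !mul0r ?add0r ?addr0. Qed.

Lemma iter_stR1 c w : (iter c stR w).1 = iter c kR w.1.
Proof. by elim: c => //= c ->. Qed.

Lemma Mq_col cs :
  (Mq z cs) 0 0 = evK z (stcol cs).1.1 /\ (Mq z cs) 1 0 = evK z (stcol cs).1.2.
Proof.
elim: cs => [|c l [IH1 IH2]] /=.
  by rewrite !mxE /=; split; rewrite ?mulr0z ?mulr1z ?mul0r ?addr0.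
rewrite -mulrA iter_stR1 /=.
set X := Sq z * Mq z l.
have [hX1 hX2] : X 0 0 = evK z (kS (stcol l).1).1 /\ X 1 0 = evK z (kS (stcol l).1).2.
  have [-> ->] := Sq_mul (Mq z l).
  rewrite /kS /= evK_norm // evK_neg // !evK_rot // IH1 IH2 zinv; split=> //.
  ring.
move: hX1 hX2; set v := kS _; move: v => v.
elim: c => [|c IHc] /=; first by rewrite expr0 !mul1r.
move=> h1 h2; have [e1 e2] := IHc h1 h2.
rewrite exprS -mulrA; have [-> ->] := Rq_mul (Rq z ^+ c * X).
by rewrite /kR /= evK_norm // evK_add // evK_rot // e1 e2.
Qed.

End Mat.

Lemma W_inv cs : stcol cs \in Wl.
Proof.
have hc := W_closed.
have cR w : w \in Wl -> stR w \in Wl by move=> hw; have /andP[] := allP hc w hw.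
have cS w : w \in Wl -> stS w \in Wl by move=> hw; have /andP[] := allP hc w hw.
elim: cs => [|c l IH] /=; first exact: W_start.
move: (cS _ IH); move: (stS _) => w; elim: c => //= c IHc hw.
exact/cR/IHc.
Qed.

Lemma Sfrac_eq (z : algC) (hz5 : z ^+ 5 = 1) (hz1 : z != 1) r s :
  Sfrac z r s = evK z (stcol (hj r s)).1.2.
Proof.
rewrite /Sfrac.
have -> : inord 1 = 1 :> 'I_2 by apply/val_inj; rewrite /= inordK.
have -> : inord 0 = 0 :> 'I_2 by apply/val_inj; rewrite /= inordK.
by have [_ ->] := Mq_col z hz5 hz1 (hj r s).
Qed.

Lemma iter_rT c a b : (a < 5)%N -> iter c rT (a, b) = ((a + c * b) %% 5, b)%N.
Proof.
move=> ha; elim: c => [|c IH] /=; first by rewrite mul0n addn0 modn_small.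
by rewrite IH /rT /= modnDml mulSn [(b + _)%N]addnC addnA.
Qed.

Fixpoint res5 (cs : seq nat) : nat * nat :=
  match cs with [::] => (1, 0)%N | c :: l => iter c rT (rS (res5 l)) end.

Lemma stcol2 cs : (stcol cs).2 = res5 cs.
Proof.
have h c w : (iter c stR w).2 = iter c rT w.2 by elim: c => //= c ->.
by elim: cs => //= c l IH; rewrite h /= IH.
Qed.

Lemma res5_hj fuel r s : (0 < s)%N -> (s < fuel)%N -> coprime r s ->
  res5 (hj_aux fuel r s) = (r %% 5, s %% 5)%N.
Proof.
elim: fuel r s => [|f IH] r s s0 sf co //=.
set c := ((r + s).-1 %/ s)%N.
have hdiv := divn_eq (r + s).-1 s; have hmod := ltn_pmod (r + s).-1 s0.
rewrite -/c in hdiv.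
have e1 : ((r + s).-1 = r + s - 1)%N by rewrite -subn1.
have hge : (r <= c * s)%N by move: hdiv hmod; set cs := (c * s)%N; set m := ((r+s).-1 %% s)%N; lia.
have hlt : (c * s < r + s)%N by move: hdiv hmod; set cs := (c * s)%N; set m := ((r+s).-1 %% s)%N; lia.
case: ifP => [/eqP hcs | /eqP hcs].
  have s1 : s = 1%N.
    have : (s %| gcdn r s)%N by rewrite dvdn_gcd dvdnn -hcs dvdn_mull.
    by rewrite (eqP co) dvdn1 => /eqP.
  subst s; rewrite /= iter_rT //= muln1 add0n -hcs muln1 //.
set d := (c * s - r)%N.
have d0 : (0 < d)%N by rewrite /d; move: hge hcs; set cs := (c * s)%N; lia.
have ds : (d < s)%N by rewrite /d; move: hlt; set cs := (c * s)%N; lia.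
have cod : coprime s d.
  rewrite /coprime -dvdn1 -(eqP co).
  have g1 : (gcdn s d %| s)%N := dvdn_gcdl _ _.
  have g2 : (gcdn s d %| d)%N := dvdn_gcdr _ _.
  have g3 : (gcdn s d %| r)%N.
    have : (gcdn s d %| d + r)%N by rewrite /d subnK // dvdn_mull.
    by rewrite dvdn_addr.
  by rewrite dvdn_gcd g3 g1.
rewrite /= IH //; last by move: ds sf; lia.
rewrite /rS /= iter_rT ?ltn_pmod //; congr (_, _).
have e : (r + 5 * d = c * s + 4 * d)%N by rewrite /d; move: hge; set cs := (c * s)%N; lia.
rewrite modnDml -modnDm !modnMmr modnDm addnC -e addnC mulnC modnMDl //.
Qed.

Lemma Sval_frac (z : algC) (r s : nat) : (0 < s)%N -> coprime r s ->
  Sval z (r%:Q / s%:Q) = Sfrac z (Rp (r, s)) s.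
Proof.
move=> s0 co.
have hn : numq (r%:Q / s%:Q) = r%:Z.
  by rewrite coprimeq_num // gtr0_sg ?mul1r // ltz_nat.
have hd : denq (r%:Q / s%:Q) = s%:Z.
  rewrite coprimeq_den //=.
  have -> : (s%:Z == 0) = false by move: s0; case: (s).
  by rewrite ger0_norm.
rewrite /Sval /= [numq _]hn [denq _]hd /Rp /=.
by [].
Qed.

Section Targ.
Variable z : algC.
Hypothesis hz : 5.-primitive_root z.

Let hz5 : z ^+ 5 = 1. Proof. exact: prim_expr_order. Qed.
Let hz1 : z != 1.
Proof. by rewrite -[z]expr1 -(prim_order_dvd hz 1). Qed.
Let hz2 : z ^+ 2 != 1.
Proof. by rewrite -(prim_order_dvd hz 2). Qed.
Let hz0 : z != 0.
Proof. by apply/eqP => e; move: hz5; rewrite e expr0n /= => /eqP; rewrite eq_sym oner_eq0. Qed.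

Definition evbase (k : nat) : algC :=
  if k == 0%N then 1 else if k == 1%N then 1 + z else 1 - z ^+ 2.

Lemma evK_target b j k :
  evK z (ktarget (b, j, k)) = evbase k * ((-1) ^+ b * z ^+ j).
Proof.
have hit a : evK z (iter j krot a) = z ^+ j * evK z a.
  by elim: j => [|j IH] /=; rewrite ?expr0 ?mul1r // evK_rot // IH exprS mulrA.
rewrite /ktarget evK_norm //.
have -> : evK z ((if b then kneg else id) (iter j krot (kbase k))) =
   (-1) ^+ b * evK z (iter j krot (kbase k)).
  by case: b => /=; rewrite ?evK_neg // ?expr1 ?expr0 ?mulN1r ?mul1r.
rewrite hit /kbase /evbase.
have eb : evK z (if k == 0%N then k1 else if k == 1%N then (1, 1, 0, 0, 0)%Z else (1, 0, -1, 0, 0)%Z)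
  = if k == 0%N then 1 else if k == 1%N then 1 + z else 1 - z ^+ 2.
  case: ifP => _; first exact: evK1.
  case: ifP => _ /=; rewrite ?mulr0z ?mulr1z ?mul0r ?mul1r ?addr0 ?add0r //.
  by rewrite mulrN1z mulN1r.
rewrite eb; ring.
Qed.

Lemma evbase_neq0 b j k : evbase k * ((-1) ^+ b * z ^+ j) != 0.
Proof.
rewrite mulf_neq0 // ?mulf_neq0 ?expf_neq0 // ?oppr_eq0 ?oner_eq0 //.
rewrite /evbase; case: ifP => _; first exact: oner_neq0.
case: ifP => _.
  apply/eqP => e; move: hz2; rewrite expr2.
  have -> : z = -1 by apply/eqP; rewrite -subr_eq0 opprK addrC e.
  by rewrite mulN1r opprK eqxx.
by rewrite subr_eq0 eq_sym.
Qed.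

End Targ.

Lemma trip_bound : all (fun t => (t.1.2 < 5)%N && (t.2 < 3)%N) trip.
Proof. by vm_compute. Qed.
Lemma trip_full : all (fun b => all (fun j => all (fun k => (b, j, k) \in trip)
  (iota 0 3)) (iota 0 5)) [:: false; true].
Proof. by vm_compute. Qed.

Lemma in_trip b j k : (j < 5)%N -> (k < 3)%N -> (b, j, k) \in trip.
Proof.
move=> hj hk.
have hb : b \in [:: false; true] by case: b.
have /allP h1 := (allP trip_full) b hb.
have hj' : j \in iota 0 5 by rewrite mem_iota.
have hk' : k \in iota 0 3 by rewrite mem_iota.
have /allP h2 := h1 j hj'.
exact: h2 k hk'.
Qed.

Lemma prim_facts (z : algC) : 5.-primitive_root z -> z ^+ 5 = 1 /\ z != 1.
Proof.
move=> hz; split; first exact: prim_expr_order.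
by rewrite -[z]expr1 -(prim_order_dvd hz 1).
Qed.

Lemma realize (z : algC) (hz : 5.-primitive_root z) t : t \in trip ->
  exists x : rat, 0 < x /\ Sval z x = evbase z t.2 * ((-1) ^+ t.1.1 * z ^+ t.1.2).
Proof.
have [hz5 hz1] := prim_facts z hz.
move=> ht; have := allP wit_check t ht.
case: (wit t) => p q /= /and4P[co p0 q0 /eqP he].
exists (p%:Q / q%:Q); split.
  by rewrite divr_gt0 // ltr0n.
rewrite Sval_frac // Sfrac_eq // he.
by case: t ht {he} => [[b j] k] _; rewrite (evK_target z hz).
Qed.

Lemma cond_equiv r s :
  cond ((Rp (r, s)) %% 5, s %% 5)%N = (5 %| s)%N && ((r %% 5 == 1)%N || (r %% 5 == 4)%N).
Proof.
rewrite /cond /=.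
have -> : (s %% 5 == 0)%N = (5 %| s)%N by [].
case: (boolP (5 %| s)%N) => // /dvdnP [k ->].
by rewrite /Rp /= mulnA addnC modnMDl.
Qed.

Theorem corollary3p8 (z : algC) (hz : 5.-primitive_root z) :
  (forall w : algC,
      (exists x : rat, 0 < x /\ Sval z x = w) <->
      (w = 0 \/
       exists (b : bool) (j : nat), (j < 5)%N /\
         let c := (-1) ^+ b * z ^+ j in
         (w = c \/ w = (1 + z) * c \/ w = (1 - z ^+ 2) * c)))
  /\
  (forall r s : nat, (0 < r)%N -> (0 < s)%N -> coprime r s ->
     (Sval z (r%:Q / s%:Q) = 0 <->
      ((5 %| s)%N /\ (r %% 5 = 1 \/ r %% 5 = 4)%N))).
Proof.
have [hz5 hz1] := prim_facts z hz.
split.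
- move=> w; split.
  + case=> x [_ <-]; rewrite /Sval Sfrac_eq //.
    set w0 := stcol _.
    have hw : w0 \in Wl := W_inv _.
    have /andP[h1 h2] := allP W_check w0 hw.
    case: (boolP (cond w0.2)) => hc.
      by left; rewrite (eqP (implyP h1 hc)) evK0.
    right; have /hasP[[[b j] k] ht /eqP <-] := implyP h2 hc.
    have /andP[/= hj hk] := allP trip_bound _ ht.
    rewrite (evK_target z hz); exists b, j; split => //.
    by clear ht; move: hk; case: k => [|[|[|]]] //= _; [left; rewrite mul1r | right; left | right; right].
  + case=> [-> | [b [j [hj hw]]]].
      exists (1%:Q / 5%:Q); split; first by [].
      rewrite Sval_frac // Sfrac_eq //.
      by rewrite (eqP zero_check) evK0.
    have real k : (k < 3)%N -> exists x : rat, 0 < x /\ Sval z x = evbase z k * ((-1) ^+ b * z ^+ j).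
      by move=> hk; exact: (realize z hz (b, j, k) (in_trip b j k hj hk)).
    case: hw => [-> | [-> | ->]].
    * by have [x [x0 e]] := real 0%N isT; exists x; rewrite e /evbase /= mul1r.
    * by have [x [x0 e]] := real 1%N isT; exists x; rewrite e.
    * by have [x [x0 e]] := real 2%N isT; exists x; rewrite e.
- move=> r s r0 s0 co.
  have coR : coprime (Rp (r, s)) s.
    by rewrite /coprime gcdnC /Rp /= addnC gcdnMDl gcdnC.
  rewrite Sval_frac // Sfrac_eq //.
  set w0 := stcol _.
  have hw : w0 \in Wl := W_inv _.
  have e2 : w0.2 = ((Rp (r, s)) %% 5, s %% 5)%N.
    by rewrite /w0 stcol2 /hj res5_hj.
  have /andP[h1 h2] := allP W_check w0 hw.
  rewrite e2 cond_equiv in h1 h2.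
  split.
  + move=> h0; case: (boolP ((5 %| s)%N && ((r %% 5 == 1)%N || (r %% 5 == 4)%N))).
      by case/andP => -> /orP [/eqP -> | /eqP ->]; [split; [|left] | split; [|right]].
    move=> hc; have /hasP[[[b j] k] _ /eqP ht] := implyP h2 hc.
    by move: h0; rewrite -ht (evK_target z hz) => /eqP; rewrite (negbTE (evbase_neq0 z hz _ _ _)).
  + case=> h5 hr; have hc : (5 %| s)%N && ((r %% 5 == 1)%N || (r %% 5 == 4)%N).
      by rewrite h5; case: hr => ->.
    by rewrite (eqP (implyP h1 hc)) evK0.
Qed.
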